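(* Let $V\subseteq\mathcal V$ be finite and $\mathbb E,\mathbb F\in\mathit{NProg}(V)$. Then: (1) $\mathbb E\le_P^p\mathbb F$ iff $\bigvee_{\mathcal F\in\mathbb F}\mathrm{span}(\mathcal F)\subseteq\bigvee_{\mathcal E\in\mathbb E}\mathrm{span}(\mathcal E)$; (2) $\mathbb E\le_T^p\mathbb F$ iff $T_{\mathbb E}\sqsubseteq T_{\mathbb F}$ and $\bigvee_{\mathcal F\in\mathbb F}\mathrm{span}(\mathcal F\circ\mathcal P_{T_{\mathbb E}})\subseteq\bigvee_{\mathcal E\in\mathbb E}\mathrm{span}(\mathcal E\circ\mathcal P_{T_{\mathbb E}})$; (3) if both $\mathbb E$ and $\mathbb F$ contain only trace-preserving super-operators, then $\mathbb E\le_T^p\mathbb F$ iff $\mathbb E\le_P^p\mathbb F$.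
   Context: $\mathcal V$ is a countably infinite set of quantum variables, each with state space $\mathbb C^2$; for finite $V$, $\mathcal H_V=\bigotimes_{q\in V}\mathcal H_q$. $\mathcal D(\mathcal H)$: partial density operators; $\mathcal S(\mathcal H)$: projectors, identified with their image subspaces, $\sqsubseteq$ being inclusion. $\mathit{DProg}(V)$: completely positive trace-nonincreasing super-operators on $\mathcal L(\mathcal H_V)$; $\mathit{NProg}(V)$: nonempty, convex, closed subsets of $\mathit{DProg}(V)$. Operators/super-operators on subsystems are implicitly extended by tensoring with identities. For finite $W$ and $P,Q\in\mathcal S(\mathcal H_W)$: $\mathbb E\models_{tot}(\{P\},\{Q\})$ iff for every finite $X\supseteq V\cup W$ and $\rho\in\mathcal D(\mathcal H_X)$, ${\rm tr}(P\rho)\le\inf_{\mathcal E\in\mathbb E}{\rm tr}(Q\mathcal E(\rho))$; $\mathbb E\models_{par}(\{P\},\{Q\})$ iff for all such $X,\rho$, ${\rm tr}(P\rho)\le\inf_{\mathcal E\in\mathbb E}[{\rm tr}(Q\mathcal E(\rho))+{\rm tr}(\rho)-{\rm tr}(\mathcal E(\rho))]$. $\mathbb E\le_T^p\mathbb F$ iff for every finite $W$ and all $P,Q\in\mathcal S(\mathcal H_W)$, $\mathbb E\models_{tot}(\{P\},\{Q\})$ implies $\mathbb F\models_{tot}(\{P\},\{Q\})$; $\le_P^p$ likewise with $\models_{par}$. For a completely positive $\mathcal G(A)=\sum_iG_iAG_i^\dagger$, $\mathrm{span}(\mathcal G)$ is the linear span of the Kraus operators $\{G_i\}$ in $\mathcal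 L(\mathcal H_V)$ (independent of representation); $\bigvee$ of such spans denotes the smallest subspace of $\mathcal L(\mathcal H_V)$ containing them. For $\mathcal E\in\mathit{DProg}(V)$, $T_{\mathcal E}=\{|\psi\rangle:{\rm tr}(\mathcal E(|\psi\rangle\langle\psi|))={\rm tr}(|\psi\rangle\langle\psi|)\}$, and $T_{\mathbb E}=\bigcap_{\mathcal E\in\mathbb E}T_{\mathcal E}$ (a subspace, identified with its projector). $\mathcal P_{T}$ denotes the super-operator $\rho\mapsto T\rho T$. *)

(* Defs.v *)
From HB Require Import structures.
From mathcomp Require Import all_boot all_order all_algebra.
From mathcomp Require Import finmap.
From mathcomp Require Import complex.
From mathcomp Require Import reals.

Set Implicit Arguments.
Unset Strict Implicit.
Unset Printing Implicit Defensive.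

Import Order.TTheory GRing.Theory Num.Theory.
Local Open Scope ring_scope.
Local Open Scope complex_scope.

(* Quantum variables: the countably infinite set nat; each has state space C^2,
   with computational basis indexed by bool.  For a finite set X of variables,
   H_X = tensor_{q in X} C^2 has orthonormal basis indexed by the
   assignments X -> bool. Operators on H_X are square matrices indexed by
   (the enumeration of) these assignments. *)

Section Quantum.
Variable R : realType.
Local Notation C := (R[i]).

Definition basis (X : {fset nat}) := {ffun X -> bool}.
Definition dim (X : {fset nat}) := #|basis X|.
Definition op (X : {fset nat}) := 'M[C]_(dim X).
Definition ket (X : {fset nat}) := 'cV[C]_(dim X).

Definition dag m n (A : 'M[C]_(m, n)) : 'M[C]_(n, m) := (map_mx Num.conj A)^T.

Definition ent X (A : op X) (s t : basis X) : C := A (enum_rank s) (enum_rank t).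
Definition mkop X (f : basis X -> basis X -> C) : op X :=
  \matrix_(i, j) f (enum_val i) (enum_val j).

(* total view of an assignment (variables outside X are mapped to false) *)
Definition asg X (s : basis X) (n : nat) : bool :=
  if (insub n : option X) is Some x then s x else false.
(* restriction of an assignment of X to V (meaningful when V `<=` X) *)
Definition restr (V X : {fset nat}) (s : basis X) : basis V := [ffun v : V => asg s (val v)].
Definition agree_out (V X : {fset nat}) (s t : basis X) : bool :=
  [forall x : X, (val x \in V) || (s x == t x)].
Definition merge (V X : {fset nat}) (u : basis V) (r : basis X) : basis X :=
  [ffun x : X => if (insub (val x) : option V) is Some v then u v else r x].

(* cylindrical extension A (x) I of an operator on H_V to H_X (V `<=` X) *)
Definition ext (V X : {fset nat}) (A : op V) : op X :=
  mkop (fun s t => if agree_out V s t then ent A (restr V s) (restr V t) else 0).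

Definition sop V := op V -> op V.

(* extension E (x) id of a super-operator on L(H_V) to L(H_X) (V `<=` X):
   writing A = sum_{r,r'} A_{r r'} (x) |r><r'| (r, r' assignments of X \ V),
   (E (x) id)(A) = sum_{r,r'} E(A_{r r'}) (x) |r><r'|. *)
Definition block (V X : {fset nat}) (A : op X) (s t : basis X) : op V :=
  mkop (fun u u' => ent A (merge u s) (merge u' t)).
Definition ext_sop (V X : {fset nat}) (E : sop V) : op X -> op X :=
  fun A => mkop (fun s t => ent (E (block V A s t)) (restr V s) (restr V t)).

Definition psd n (A : 'M[C]_n) : Prop :=
  forall v : 'cV[C]_n, 0 <= (dag v *m A *m v) 0 0.
Definition is_pdens n (rho : 'M[C]_n) : Prop := psd rho /\ \tr rho <= 1.
Definition is_proj n (P : 'M[C]_n) : Prop := P *m P = P /\ dag P = P.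

Definition kraus_of V (E : sop V) (Ks : seq (op V)) : Prop :=
  forall A, E A = \sum_(K <- Ks) K *m A *m dag K.
Definition is_CP V (E : sop V) : Prop := exists Ks, kraus_of E Ks.
Definition trace_nonincr V (E : sop V) : Prop :=
  forall rho : op V, psd rho -> \tr (E rho) <= \tr rho.
Definition trace_pres V (E : sop V) : Prop :=
  forall rho : op V, \tr (E rho) = \tr rho.

Definition DProg V (E : sop V) : Prop := is_CP E /\ trace_nonincr E.

Definition convex_sops V (EE : sop V -> Prop) : Prop :=
  forall (E1 E2 : sop V) (l : R), EE E1 -> EE E2 -> 0 <= l <= 1 ->
    EE (fun A => l%:C *: E1 A + (1 - l)%:C *: E2 A).
Definition closed_sops V (EE : sop V -> Prop) : Prop :=
  forall (Es : nat -> sop V) (E : sop V), (forall n, EE (Es n)) ->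
    (forall A i j (eps : R), 0 < eps ->
       exists N, forall n, (N <= n)%N -> `|Es n A i j - E A i j| < eps%:C) ->
    EE E.
Definition NProg V (EE : sop V -> Prop) : Prop :=
  [/\ exists E, EE E, (forall E, EE E -> DProg E), convex_sops EE & closed_sops EE].

(* satisfaction of total / partial correctness of ({P},{Q}); the infimum over
   E in EE is unfolded as "for every E in EE" *)
Definition tot_sat V W (EE : sop V -> Prop) (P Q : op W) : Prop :=
  forall X : {fset nat}, (V `|` W `<=` X)%fset -> forall rho : op X, is_pdens rho ->
    forall E, EE E ->
      \tr (@ext W X P *m rho) <= \tr (@ext W X Q *m @ext_sop V X E rho).
Definition par_sat V W (EE : sop V -> Prop) (P Q : op W) : Prop :=
  forall X : {fset nat}, (V `|` W `<=` X)%fset -> forall rho : op X, is_pdens rho ->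
    forall E, EE E ->
      \tr (@ext W X P *m rho) <=
        \tr (@ext W X Q *m @ext_sop V X E rho) + \tr rho - \tr (@ext_sop V X E rho).

Definition refT V (EE FF : sop V -> Prop) : Prop :=
  forall (W : {fset nat}) (P Q : op W), is_proj P -> is_proj Q ->
    tot_sat EE P Q -> tot_sat FF P Q.
Definition refP V (EE FF : sop V -> Prop) : Prop :=
  forall (W : {fset nat}) (P Q : op W), is_proj P -> is_proj Q ->
    par_sat EE P Q -> par_sat FF P Q.

Definition lin_span V (S : op V -> Prop) (A : op V) : Prop :=
  exists cs : seq (C * op V), (forall p, p \in cs -> S p.2) /\
    A = \sum_(p <- cs) p.1 *: p.2.
(* span(G): linear span of the Kraus operators of G (independent of the
   chosen Kraus representation) *)
Definition kraus_span V (G : sop V) (A : op V) : Prop :=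
  exists Ks, kraus_of G Ks /\ lin_span (fun B => B \in Ks) A.
Definition join_span V (GG : sop V -> Prop) : op V -> Prop :=
  lin_span (fun B => exists G, GG G /\ kraus_span G B).

Definition T_of V (E : sop V) (psi : ket V) : Prop :=
  \tr (E (psi *m dag psi)) = \tr (psi *m dag psi).
Definition T_set V (EE : sop V -> Prop) (psi : ket V) : Prop :=
  forall E, EE E -> T_of E psi.

Definition comp_proj V (GG : sop V -> Prop) (T : op V) : sop V -> Prop :=
  fun G' => exists G, GG G /\ G' = (fun A => G (T *m A *m T)).

End Quantum.

(* Main.v *)
Require Import Defs.

From HB Require Import structures.
From mathcomp Require Import all_boot all_order all_algebra.
From mathcomp Require Import finmap complex reals.
Set Implicit Arguments.
Unset Strict Implicit.
Unset Printing Implicit Defensive.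
Import Order.TTheory GRing.Theory Num.Theory.
Local Open Scope ring_scope.

Section P1.
Variable R : realType.
Local Notation C := (R[i]).

Lemma sum_ord X (F : 'I_(Defs.dim X) -> C) :
  \sum_i F i = \sum_(s : basis X) F (enum_rank s).
Proof. by rewrite (reindex (@enum_rank (basis X))) //=; apply: onW_bij; exact: enum_rank_bij. Qed.

Lemma entE X (f : basis X -> basis X -> C) s t : ent (mkop f) s t = f s t.
Proof. by rewrite /ent /mkop mxE !enum_rankK. Qed.

Lemma ent_mul X (A B : op R X) s t :
  ent (A *m B) s t = \sum_u ent A s u * ent B u t.
Proof. by rewrite /ent mxE sum_ord. Qed.

Lemma op_eqP X (A B : op R X) : (forall s t, ent A s t = ent B s t) -> A = B.
Proof.
move=> H; apply/matrixP => i j; have := H (enum_val i) (enum_val j).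
by rewrite /ent !enum_valK.
Qed.

Lemma ent_dag X (A : op R X) s t : ent (dag A) s t = (ent A t s)^*.
Proof. by rewrite /ent /dag !mxE. Qed.

Lemma ent_add X (A B : op R X) s t : ent (A + B) s t = ent A s t + ent B s t.
Proof. by rewrite /ent mxE. Qed.

Lemma ent_scale X c (A : op R X) s t : ent (c *: A) s t = c * ent A s t.
Proof. by rewrite /ent mxE. Qed.

Lemma ent_opp X (A : op R X) s t : ent (- A) s t = - ent A s t.
Proof. by rewrite /ent mxE. Qed.

Lemma ent0 X s t : ent (0 : op R X) s t = 0.
Proof. by rewrite /ent mxE. Qed.

Lemma ent1 X s t : ent (1%:M : op R X) s t = (s == t)%:R.
Proof. by rewrite /ent mxE (inj_eq enum_rank_inj). Qed.

Lemma ent_sum X I (r : seq I) (P : pred I) (F : I -> op R X) s t :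
  ent (\sum_(i <- r | P i) F i) s t = \sum_(i <- r | P i) ent (F i) s t.
Proof. by rewrite /ent summxE. Qed.

Lemma tr_ent X (A : op R X) : \tr A = \sum_s ent A s s.
Proof. by rewrite /mxtrace sum_ord. Qed.

Definition kent X (v : ket R X) (s : basis X) : C := v (enum_rank s) 0.
Definition mkket X (f : basis X -> C) : ket R X := \col_i f (enum_val i).

Lemma kentE X (f : basis X -> C) s : kent (mkket f) s = f s.
Proof. by rewrite /kent /mkket mxE enum_rankK. Qed.

Lemma ket_eqP X (v w : ket R X) : (forall s, kent v s = kent w s) -> v = w.
Proof.
move=> H; apply/matrixP => i j; rewrite (ord1 j); have := H (enum_val i).
by rewrite /kent !enum_valK.
Qed.

Lemma kent_mul X (A : op R X) (v : ket R X) s :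
  kent (A *m v) s = \sum_u ent A s u * kent v u.
Proof. by rewrite /kent mxE sum_ord. Qed.

Lemma kent_add X (v w : ket R X) s : kent (v + w) s = kent v s + kent w s.
Proof. by rewrite /kent mxE. Qed.
Lemma kent_scale X c (v : ket R X) s : kent (c *: v) s = c * kent v s.
Proof. by rewrite /kent mxE. Qed.
Lemma kent0 X s : kent (0 : ket R X) s = 0.
Proof. by rewrite /kent mxE. Qed.

Lemma asg_val X (s : basis X) (x : X) : asg s (val x) = s x.
Proof. by rewrite /asg valK. Qed.

Lemma asg_out X (s : basis X) n : n \notin X -> asg s n = false.
Proof. by move=> H; rewrite /asg insubN. Qed.

Lemma asg_inj X (s t : basis X) : (forall n, asg s n = asg t n) -> s = t.
Proof. by move=> H; apply/ffunP => x; rewrite -!asg_val. Qed.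

Lemma asg_restr V X (s : basis X) n :
  asg (restr V s) n = if n \in V then asg s n else false.
Proof.
case: (boolP (n \in V)) => Hn; last by rewrite asg_out.
by rewrite -[n]/(val (FSetSub Hn)) asg_val /restr ffunE.
Qed.

Lemma asg_merge V X (u : basis V) (r : basis X) n : (V `<=` X)%fset ->
  asg (Defs.merge u r) n = if n \in V then asg u n else asg r n.
Proof.
move=> VX; case: (boolP (n \in X)) => HX; last first.
  have HV : n \notin V by apply: contra HX; apply: (fsubsetP VX).
  by rewrite (negbTE HV) !asg_out.
rewrite -[n]/(val (FSetSub HX)) asg_val /Defs.merge ffunE /=.
have E : asg r n = r (FSetSub HX) := asg_val r (FSetSub HX).
rewrite E; case: (boolP (n \in V)) => HV.
  by rewrite insubT /= -(asg_val u (FSetSub HV)).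
by rewrite insubN.
Qed.

Lemma agreeP V X (s t : basis X) :
  reflect (forall n, n \notin V -> asg s n = asg t n) (agree_out V s t).
Proof.
apply: (iffP forallP) => H.
  move=> n nV; case: (boolP (n \in X)) => HX; last by rewrite !asg_out.
  have := H (FSetSub HX); rewrite /= (negbTE nV) /= => /eqP E.
  by rewrite -[n]/(val (FSetSub HX)) !asg_val.
move=> x; case: (boolP (val x \in V)) => //= nV.
by rewrite -!asg_val H.
Qed.

Section Asg.
Variables (V X : {fset nat}).
Hypothesis VX : (V `<=` X)%fset.

Lemma asg_outV (u : basis V) n : n \notin V -> asg u n = false.
Proof. exact: asg_out. Qed.

Lemma restr_merge (u : basis V) (r : basis X) : restr V (Defs.merge u r) = u.
Proof.
apply: asg_inj => n; rewrite asg_restr asg_merge //.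
by case: (boolP (n \in V)) => H //; rewrite asg_out.
Qed.

Lemma merge_restr (t : basis X) : Defs.merge (restr V t) t = t.
Proof. by apply: asg_inj => n; rewrite asg_merge // asg_restr; case: (n \in V). Qed.

Lemma merge_merge (u u' : basis V) (r : basis X) :
  Defs.merge u (Defs.merge u' r) = Defs.merge u r.
Proof. by apply: asg_inj => n; rewrite !asg_merge //; case: (n \in V). Qed.

Lemma agree_merge (u : basis V) (r : basis X) : agree_out V r (Defs.merge u r).
Proof. by apply/agreeP => n nV; rewrite asg_merge // (negbTE nV). Qed.

Lemma agree_refl (s : basis X) : agree_out V s s.
Proof. by apply/agreeP. Qed.

Lemma agree_sym (s t : basis X) : agree_out V s t = agree_out V t s.
Proof. by apply/agreeP/agreeP => H n nV; rewrite H. Qed.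

Lemma agree_trans (s t w : basis X) :
  agree_out V s t -> agree_out V t w -> agree_out V s w.
Proof. by move=> /agreeP H1 /agreeP H2; apply/agreeP => n nV; rewrite H1 ?H2. Qed.

Lemma merge_agree (u : basis V) (s t : basis X) :
  agree_out V s t -> Defs.merge u s = Defs.merge u t.
Proof.
move=> /agreeP H; apply: asg_inj => n; rewrite !asg_merge //.
by case: (boolP (n \in V)) => // /H.
Qed.

Lemma agree_mergel (u : basis V) (s t : basis X) :
  agree_out V (Defs.merge u s) t = agree_out V s t.
Proof.
apply/idP/idP => H.
  by apply: agree_trans (agree_merge u s) H.
by apply: agree_trans H; rewrite agree_sym agree_merge.
Qed.

Lemma agree_restr_eq (s t : basis X) :
  agree_out V s t -> restr V s = restr V t -> s = t.
Proof.
move=> H1 H2; by rewrite -(merge_restr s) -(merge_restr t) H2 (merge_agree _ H1).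
Qed.

Lemma eq_agree (s t : basis X) : (s == t) = agree_out V s t && (restr V s == restr V t).
Proof.
apply/eqP/andP => [->|[H1 /eqP H2]]; first by rewrite agree_refl.
exact: agree_restr_eq.
Qed.

Lemma sum_class (s : basis X) (f : basis X -> C) :
  \sum_(t | agree_out V s t) f t = \sum_(u : basis V) f (Defs.merge u s).
Proof.
rewrite (reindex_onto (fun u : basis V => Defs.merge u s) (@restr V X)) /=.
  apply: eq_bigl => u; by rewrite agree_merge restr_merge eqxx.
move=> t H; rewrite (merge_agree _ H) merge_restr //.
Qed.

Lemma sum_class_if (s : basis X) (f : basis X -> C) :
  \sum_t (if agree_out V s t then f t else 0) = \sum_(u : basis V) f (Defs.merge u s).
Proof. by rewrite -big_mkcond sum_class. Qed.

Definition u0 : basis V := [ffun => false].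
Definition clr (t : basis X) := Defs.merge u0 t.

Lemma agree_clr (s t : basis X) : agree_out V s t = (clr s == clr t).
Proof.
apply/idP/eqP => [H|H]; first exact: merge_agree.
apply: (@agree_trans _ (clr s)); first exact: agree_merge.
by rewrite H agree_sym agree_merge.
Qed.

Lemma sum_split (f : basis X -> C) :
  \sum_t f t = \sum_(r | clr r == r) \sum_(u : basis V) f (Defs.merge u r).
Proof.
rewrite (partition_big clr (fun r => clr r == r)) /=; last by move=> i _; rewrite /clr merge_merge.
apply: eq_bigr => r /eqP Hr; rewrite -sum_class; apply: eq_bigl => t.
by rewrite agree_clr Hr eq_sym.
Qed.

End Asg.
End P1.

From HB Require Import structures.
From mathcomp Require Import all_boot all_order all_algebra.
From mathcomp Require Import finmap complex reals.
Set Implicit Arguments.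
Unset Strict Implicit.
Unset Printing Implicit Defensive.
Import Order.TTheory GRing.Theory Num.Theory.
Local Open Scope ring_scope.

Section P2.
Variable R : realType.
Local Notation C := (R[i]).

Lemma qform X (A : op R X) (v : ket R X) :
  (dag v *m A *m v) 0 0 =
  \sum_t \sum_s (kent v s)^* * ent A s t * kent v t.
Proof.
rewrite mxE sum_ord; apply: eq_bigr => t _; rewrite mxE sum_ord mulr_suml.
by apply: eq_bigr => s _; rewrite /dag !mxE.
Qed.

Lemma mx_eq_col n m (A B : 'M[C]_(n, m)) :
  (forall x : 'cV_m, A *m x = B *m x) -> A = B.
Proof.
move=> H; apply/matrixP => i j.
have := congr1 (fun M : 'cV[C]_n => M i 0) (H (delta_mx j 0)).
by rewrite -!colE !mxE.
Qed.

Section Ext.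
Variables (V X : {fset nat}).
Hypothesis VX : (V `<=` X)%fset.

Lemma ent_ext (A : op R V) s t :
  ent (ext X A) s t = if agree_out V s t then ent A (restr V s) (restr V t) else 0.
Proof. by rewrite /ext entE. Qed.

Lemma sum_classM (s : basis X) (a g : basis X -> C) :
  \sum_t (if agree_out V s t then a t else 0) * g t =
  \sum_(u : basis V) a (Defs.merge u s) * g (Defs.merge u s).
Proof.
rewrite -(sum_class_if VX s (fun t => a t * g t)); apply: eq_bigr => t _.
by case: ifP; rewrite ?mul0r.
Qed.

Lemma sum_classMr (s : basis X) (a g : basis X -> C) :
  \sum_t g t * (if agree_out V s t then a t else 0) =
  \sum_(u : basis V) g (Defs.merge u s) * a (Defs.merge u s).
Proof.
rewrite -(sum_class_if VX s (fun t => g t * a t)); apply: eq_bigr => t _.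
by case: ifP; rewrite ?mulr0.
Qed.

Lemma sum_ext_l (s : basis X) (A : op R V) (g : basis X -> C) :
  \sum_t ent (ext X A) s t * g t =
  \sum_(u : basis V) ent A (restr V s) u * g (Defs.merge u s).
Proof.
rewrite (eq_bigr (fun t => if agree_out V s t then ent A (restr V s) (restr V t) * g t else 0)); last first.
  by move=> t _; rewrite ent_ext; case: ifP; rewrite ?mul0r.
rewrite (sum_class_if VX); apply: eq_bigr => u _; by rewrite (restr_merge VX).
Qed.

Lemma sum_ext_r (t : basis X) (A : op R V) (g : basis X -> C) :
  \sum_s g s * ent (ext X A) s t =
  \sum_(u : basis V) g (Defs.merge u t) * ent A u (restr V t).
Proof.
rewrite (eq_bigr (fun s => if agree_out V t s then g s * ent A (restr V s) (restr V t) else 0)); last first.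
  by move=> s _; rewrite ent_ext agree_sym; case: ifP; rewrite ?mulr0.
rewrite (sum_class_if VX); apply: eq_bigr => u _; by rewrite (restr_merge VX).
Qed.

Lemma ext_mul (A B : op R V) : ext X (A *m B) = ext X A *m ext X B.
Proof.
apply: op_eqP => s t; rewrite ent_mul sum_ext_l ent_ext.
rewrite (eq_bigr (fun u => ent A (restr V s) u * (if agree_out V s t then ent B u (restr V t) else 0))); last by move=> u _; rewrite ent_ext (agree_mergel VX) (restr_merge VX).
case: ifP => H; last by rewrite big1 // => u _; rewrite mulr0.
by rewrite ent_mul.
Qed.

Lemma ext_dag (A : op R V) : ext X (dag A) = dag (ext X A).
Proof.
apply: op_eqP => s t; rewrite ent_dag !ent_ext ent_dag agree_sym.
by case: ifP; rewrite ?conjC0.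
Qed.

Lemma ext_add (A B : op R V) : ext X (A + B) = ext X A + ext X B.
Proof.
apply: op_eqP => s t; rewrite ent_add !ent_ext ent_add.
by case: ifP; rewrite ?addr0.
Qed.

Lemma ext_scale c (A : op R V) : ext X (c *: A) = c *: ext X A.
Proof.
apply: op_eqP => s t; rewrite ent_scale !ent_ext ent_scale.
by case: ifP; rewrite ?mulr0.
Qed.

Lemma ext0 : ext X (0 : op R V) = 0.
Proof. by apply: op_eqP => s t; rewrite ent_ext !ent0; case: ifP. Qed.

Lemma ext_opp (A : op R V) : ext X (- A) = - ext X A.
Proof.
apply: op_eqP => s t; rewrite ent_opp !ent_ext ent_opp.
by case: ifP; rewrite ?oppr0.
Qed.

Lemma ext_sub (A B : op R V) : ext X (A - B) = ext X A - ext X B.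
Proof. by rewrite ext_add ext_opp. Qed.

Lemma ext_sum I (r : seq I) (P : pred I) (F : I -> op R V) :
  ext X (\sum_(i <- r | P i) F i) = \sum_(i <- r | P i) ext X (F i).
Proof.
elim/big_rec2: _ => [|i y1 y2 _ <-]; first exact: ext0.
by rewrite ext_add.
Qed.

Lemma ext1 : ext X (1%:M : op R V) = 1%:M.
Proof.
apply: op_eqP => s t; rewrite ent_ext !ent1 (eq_agree VX).
by case: ifP.
Qed.

Lemma ext_sop_kraus (E : sop R V) Ks (rho : op R X) : kraus_of E Ks ->
  ext_sop E rho = \sum_(K <- Ks) ext X K *m rho *m dag (ext X K).
Proof.
move=> HK; apply: op_eqP => s t; rewrite /ext_sop entE HK !ent_sum.
apply: eq_bigr => K _; rewrite -(ext_dag K) !ent_mul sum_ext_r.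
apply: eq_bigr => u' _; rewrite !ent_mul sum_ext_l; congr (_ * _).
by apply: eq_bigr => u _; rewrite /block entE.
Qed.

Definition slice (r : basis X) (v : ket R X) : ket R V :=
  mkket (fun u => kent v (Defs.merge u r)).

Lemma slice_ext r (A : op R V) (v : ket R X) :
  slice r (ext X A *m v) = A *m slice r v.
Proof.
apply: ket_eqP => u; rewrite kentE !kent_mul sum_ext_l (restr_merge VX).
by apply: eq_bigr => w _; rewrite (merge_merge VX) kentE.
Qed.

Lemma slice_eq (v w : ket R X) : (forall r, slice r v = slice r w) -> v = w.
Proof.
move=> H; apply: ket_eqP => t.
have := congr1 (fun z => kent z (restr V t)) (H t).
by rewrite !kentE (merge_restr VX).
Qed.

Lemma psd_block (sig : op R X) r : psd sig -> psd (block V sig r r).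
Proof.
move=> Hs v.
pose w : ket R X := mkket (fun t => if agree_out V r t then kent v (restr V t) else 0).
have := Hs w; rewrite !qform.
suff -> : \sum_t \sum_s (kent w s)^* * ent sig s t * kent w t =
  \sum_t \sum_s (kent v s)^* * ent (block V sig r r) s t * kent v t by [].
rewrite (eq_bigr (fun t => if agree_out V r t then
   (\sum_s (kent w s)^* * ent sig s t) * kent v (restr V t) else 0)); last first.
  move=> t _; rewrite -mulr_suml kentE; case: ifP => // _.
  by rewrite mulr0.
rewrite (sum_class_if VX); apply: eq_bigr => u' _; rewrite (restr_merge VX).
rewrite -mulr_suml; congr (_ * _).
rewrite (eq_bigr (fun s => if agree_out V r s then
   (kent v (restr V s))^* * ent sig s (Defs.merge u' r) else 0)); last first.
  by move=> s _; rewrite kentE; case: ifP; rewrite ?conjC0 ?mul0r.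
rewrite (sum_class_if VX); apply: eq_bigr => u _.
by rewrite (restr_merge VX) /block entE.
Qed.

Lemma block_merge (sig : op R X) (u u' : basis V) r :
  block V sig (Defs.merge u r) (Defs.merge u' r) = block V sig r r.
Proof. by apply: op_eqP => a b; rewrite /block !entE !(merge_merge VX). Qed.

Lemma ext_tn (E : sop R V) (sig : op R X) : trace_nonincr E -> psd sig ->
  \tr (ext_sop E sig) <= \tr sig.
Proof.
move=> HE Hs; rewrite !tr_ent (sum_split VX) [Z in _ <= Z](sum_split VX).
apply: ler_sum => r _.
rewrite (eq_bigr (fun u : basis V => ent (E (block V sig r r)) u u)); last first.
  by move=> u _; rewrite /ext_sop entE (restr_merge VX) block_merge.
have := HE _ (psd_block r Hs); rewrite !tr_ent.
by rewrite [Z in _ <= Z -> _](eq_bigr (fun u : basis V => ent sig (Defs.merge u r) (Defs.merge u r))) // => u _; rewrite /block entE.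
Qed.

End Ext.

Lemma ext_id V (A : op R V) : ext V A = A.
Proof.
have rV : forall s : basis V, restr V s = s.
  move=> s; apply: asg_inj => n; rewrite asg_restr.
  by case: (boolP (n \in V)) => // H; rewrite asg_out.
apply: op_eqP => s t; rewrite ent_ext !rV.
suff -> : agree_out V s t by [].
by apply/forallP => x; rewrite fsvalP.
Qed.

Lemma ext_trans V W X (A : op R V) : (V `<=` W)%fset -> (W `<=` X)%fset ->
  ext X (ext W A) = ext X A.
Proof.
move=> VW WX; apply: op_eqP => s t; rewrite !ent_ext.
have rr : forall s : basis X, restr V (restr W s) = restr V s.
  move=> s'; apply: asg_inj => n; rewrite !asg_restr.
  by case: (boolP (n \in V)) => // H; rewrite (fsubsetP VW).
rewrite !rr.
have -> : agree_out V s t = agree_out W s t && agree_out V (restr W s) (restr W t).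
  apply/agreeP/andP => [H|[/agreeP H1 /agreeP H2] n nV].
    split; apply/agreeP => n nW.
      by apply: H; apply: contra nW; apply: (fsubsetP VW).
    by rewrite !asg_restr; case: ifP => //; rewrite H.
  case: (boolP (n \in W)) => nW; last exact: H1.
  by have := H2 n nV; rewrite !asg_restr nW.
by case: (agree_out W s t); case: (agree_out V _ _).
Qed.

End P2.

From HB Require Import structures.
From mathcomp Require Import all_boot all_order all_algebra.
From mathcomp Require Import finmap complex reals.
From mathcomp Require Import ring.
Set Implicit Arguments.
Unset Strict Implicit.
Unset Printing Implicit Defensive.
Import Order.TTheory GRing.Theory Num.Theory.
Local Open Scope ring_scope.

Section P3.
Variable R : realType.
Local Notation C := (R[i]).

Lemma dag_mul m n p (A : 'M[C]_(m, n)) (B : 'M[C]_(n, p)) :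
  dag (A *m B) = dag B *m dag A.
Proof.
apply/matrixP => i j; rewrite /dag !mxE rmorph_sum; apply: eq_bigr => k _.
by rewrite !mxE rmorphM mulrC.
Qed.

Lemma dagK m n (A : 'M[C]_(m, n)) : dag (dag A) = A.
Proof. by apply/matrixP => i j; rewrite /dag !mxE conjCK. Qed.

Lemma dag_add m n (A B : 'M[C]_(m, n)) : dag (A + B) = dag A + dag B.
Proof. by apply/matrixP => i j; rewrite /dag !mxE rmorphD. Qed.

Lemma dag_opp m n (A : 'M[C]_(m, n)) : dag (- A) = - dag A.
Proof. by apply/matrixP => i j; rewrite /dag !mxE rmorphN. Qed.

Lemma dag_sub m n (A B : 'M[C]_(m, n)) : dag (A - B) = dag A - dag B.
Proof. by rewrite dag_add dag_opp. Qed.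

Lemma dag_scale m n c (A : 'M[C]_(m, n)) : dag (c *: A) = c^* *: dag A.
Proof. by apply/matrixP => i j; rewrite /dag !mxE rmorphM. Qed.

Lemma dag0 m n : dag (0 : 'M[C]_(m, n)) = 0.
Proof. by apply/matrixP => i j; rewrite /dag !mxE rmorph0. Qed.

Lemma dag1 n : dag (1%:M : 'M[C]_n) = 1%:M.
Proof. by apply/matrixP => i j; rewrite /dag !mxE eq_sym; case: eqP => _; rewrite ?mulr1n ?mulr0n ?conjC1 ?conjC0. Qed.

Lemma dag_sum m n I (r : seq I) (P : pred I) (F : I -> 'M[C]_(m, n)) :
  dag (\sum_(i <- r | P i) F i) = \sum_(i <- r | P i) dag (F i).
Proof.
elim/big_rec2: _ => [|i y1 y2 _ <-]; first exact: dag0.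
by rewrite dag_add.
Qed.

Definition nrm2 n (v : 'cV[C]_n) : C := (dag v *m v) 0 0.
Definition qf n (A : 'M[C]_n) (v : 'cV[C]_n) : C := (dag v *m A *m v) 0 0.

Lemma nrm2E n (v : 'cV[C]_n) : nrm2 v = \sum_i v i 0 * (v i 0)^*.
Proof. by rewrite /nrm2 mxE; apply: eq_bigr => i _; rewrite /dag !mxE mulrC. Qed.

Lemma nrm2_ge0 n (v : 'cV[C]_n) : 0 <= nrm2 v.
Proof. by rewrite nrm2E; apply: sumr_ge0 => i _; exact: mul_conjC_ge0. Qed.

Lemma nrm2_eq0 n (v : 'cV[C]_n) : nrm2 v = 0 -> v = 0.
Proof.
rewrite nrm2E => H; apply/matrixP => i j; rewrite (ord1 j) mxE.
have := @psumr_eq0P _ _ xpredT (fun i => v i 0 * (v i 0)^*) (fun i _ => mul_conjC_ge0 (v i 0)) H i isT.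
by move/eqP; rewrite mul_conjC_eq0 => /eqP.
Qed.

Lemma tr11 (A : 'M[C]_1) : \tr A = A 0 0.
Proof. by rewrite /mxtrace big_ord1. Qed.

Lemma tr_vv n (v : 'cV[C]_n) : \tr (v *m dag v) = nrm2 v.
Proof. by rewrite mxtrace_mulC tr11. Qed.

Lemma tr_Avv n (A : 'M[C]_n) (v : 'cV[C]_n) : \tr (A *m (v *m dag v)) = qf A v.
Proof. by rewrite mulmxA mxtrace_mulC mulmxA tr11. Qed.

Lemma qf_KK n (K : 'M[C]_n) v : qf (dag K *m K) v = nrm2 (K *m v).
Proof. by rewrite /qf /nrm2 dag_mul !mulmxA. Qed.

Lemma dag_delta n (i : 'I_n) : dag (delta_mx i 0 : 'cV[C]_n) = delta_mx 0 i.
Proof.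
apply/matrixP => a b; rewrite /dag !mxE (ord1 a) !eqxx /= andbT.
by case: eqP => _; rewrite ?conjC1 ?conjC0.
Qed.

Lemma tr_psd n (A : 'M[C]_n) : psd A -> 0 <= \tr A.
Proof.
move=> H; rewrite /mxtrace; apply: sumr_ge0 => i _.
have := H (delta_mx i 0); rewrite dag_delta -rowE -colE.
by rewrite !mxE.
Qed.

Lemma psd_GsG m n (G : 'M[C]_(m, n)) (S : 'M[C]_n) : psd S -> psd (G *m S *m dag G).
Proof.
move=> H v; have := H (dag G *m v).
by rewrite dag_mul dagK !mulmxA.
Qed.

Lemma tr_GsG m n (G : 'M[C]_(m, n)) (S : 'M[C]_n) : psd S -> 0 <= \tr (G *m S *m dag G).
Proof. by move=> H; apply: tr_psd; apply: psd_GsG. Qed.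

Lemma psd_vv n (v : 'cV[C]_n) : psd (v *m dag v).
Proof.
move=> u; rewrite mulmxA -mulmxA.
have -> : dag v *m u = dag (dag u *m v) by rewrite dag_mul dagK.
rewrite mxE big_ord1 /dag !mxE; exact: mul_conjC_ge0.
Qed.

Lemma entD m n (A B : 'M[C]_(m, n)) i j : (A + B) i j = A i j + B i j.
Proof. by rewrite mxE. Qed.
Lemma entB m n (A B : 'M[C]_(m, n)) i j : (A - B) i j = A i j - B i j.
Proof. by rewrite !mxE. Qed.
Lemma entZ m n c (A : 'M[C]_(m, n)) i j : (c *: A) i j = c * A i j.
Proof. by rewrite mxE. Qed.

Lemma psd_scale n c (A : 'M[C]_n) : 0 <= c -> psd A -> psd (c *: A).
Proof.
move=> c0 H v; rewrite -scalemxAr -scalemxAl entZ.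
exact: mulr_ge0.
Qed.

Lemma psd_add n (A B : 'M[C]_n) : psd A -> psd B -> psd (A + B).
Proof.
move=> HA HB v; rewrite mulmxDr mulmxDl entD.
exact: addr_ge0.
Qed.

Lemma psd_zero n (M : 'M[C]_n) (v : 'cV[C]_n) :
  psd M -> dag M = M -> qf M v = 0 -> M *m v = 0.
Proof.
move=> H HM Hv.
set w := M *m v.
have Hw1 : dag v *m M *m w = dag w *m w by rewrite /w dag_mul HM mulmxA.
have Hw2 : dag w *m M *m v = dag w *m w by rewrite -mulmxA.
set a := nrm2 w; set b := qf M w.
have a0 : 0 <= a by apply: nrm2_ge0.
have b0 : 0 <= b by apply: H.
have b1 : 0 < b + 1 by rewrite ltr_wpDl.
set k := (b + 1)^-1.
have k0 : 0 <= k by rewrite invr_ge0 ltW.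
set t := - (a * k).
have Ht : t^* = t by rewrite /t rmorphN rmorphM /= (geC0_conj a0) (geC0_conj k0).
have := H (v + t *: w).
have -> : (dag (v + t *: w) *m M *m (v + t *: w)) 0 0 =
   qf M v + t * a + t^* * a + t^* * t * b.
  rewrite dag_add dag_scale !mulmxDl !mulmxDr -!scalemxAl -!scalemxAr.
  rewrite !entD !entZ Hw1 Hw2 -/(nrm2 w) -/a -/(qf M v) -/(qf M w) -/b.
  by rewrite !addrA !mulrA.
rewrite Hv Ht add0r.
have -> : t * a + t * a + t * t * b = (a * a * k) * (k * b - 2).
  by rewrite /t; ring.
have kb : k * b - 2 < 0.
  rewrite subr_lt0; apply: (@le_lt_trans _ _ 1); last by rewrite ltr1n.
  by rewrite mulrC ler_pdivrMr // mul1r lerDl ler01.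
rewrite (nmulr_lge0 _ kb) => H1.
have : a * a * k = 0 by apply/eqP; rewrite eq_le H1 !mulr_ge0.
move/eqP; rewrite !mulf_eq0 invr_eq0 (gt_eqF b1) orbF orbb => /eqP /nrm2_eq0.
done.
Qed.

End P3.

From HB Require Import structures.
From mathcomp Require Import all_boot all_order all_algebra.
From mathcomp Require Import finmap complex reals.
From mathcomp Require Import ring.
Set Implicit Arguments.
Unset Strict Implicit.
Unset Printing Implicit Defensive.
Import Order.TTheory GRing.Theory Num.Theory.
Local Open Scope ring_scope.

Section P4.
Variable R : realType.
Local Notation C := (R[i]).
Variable n : nat.
Implicit Types (P Q A B M rho sig : 'M[C]_n) (Ks : seq 'M[C]_n) (v x : 'cV[C]_n).

Definition kr Ks rho := \sum_(K <- Ks) K *m rho *m dag K.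
Definition tnonincr Ks := forall sig, psd sig -> \tr (kr Ks sig) <= \tr sig.
Definition Mk Ks := 1%:M - \sum_(K <- Ks) dag K *m K.

Lemma tr_sum I (r : seq I) (Pr : pred I) (F : I -> 'M[C]_n) :
  \tr (\sum_(i <- r | Pr i) F i) = \sum_(i <- r | Pr i) \tr (F i).
Proof. exact: raddf_sum. Qed.

Lemma kr_scale Ks c rho : kr Ks (c *: rho) = c *: kr Ks rho.
Proof.
rewrite /kr scaler_sumr; apply: eq_bigr => K _.
by rewrite -scalemxAr -scalemxAl.
Qed.

Lemma psd_kr Ks rho : psd rho -> psd (kr Ks rho).
Proof.
move=> H; rewrite /kr; elim: Ks => [|K Ks IH]; first by rewrite big_nil => v; rewrite mulmx0 mul0mx mxE.
by rewrite big_cons; apply: psd_add => //; apply: psd_GsG.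
Qed.

Lemma tr_kr_vv Ks x : \tr (kr Ks (x *m dag x)) = \sum_(K <- Ks) nrm2 (K *m x).
Proof.
rewrite /kr tr_sum; apply: eq_bigr => K _.
by rewrite -tr_vv dag_mul !mulmxA.
Qed.

Lemma tr_proj Q Z : is_proj Q -> \tr (Q *m Z) = \tr (Q *m Z *m dag Q).
Proof.
case=> QQ QD; by rewrite QD -{1}QQ -mulmxA mxtrace_mulC.
Qed.

Lemma tr_Qkr_vv Q Ks x : is_proj Q ->
  \tr (Q *m kr Ks (x *m dag x)) = \sum_(K <- Ks) nrm2 (Q *m K *m x).
Proof.
move=> HQ; rewrite /kr mulmx_sumr tr_sum; apply: eq_bigr => K _.
by rewrite (tr_proj _ HQ) -tr_vv !dag_mul !mulmxA.
Qed.

Lemma proj_compl Q : is_proj Q -> is_proj (1%:M - Q).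
Proof.
case=> QQ QD; split; last by rewrite dag_sub dag1 QD.
by rewrite mulmxBl mul1mx mulmxBr mulmx1 QQ subrr subr0.
Qed.

Lemma nrm2_proj Q y : is_proj Q -> nrm2 (Q *m y) = qf Q y.
Proof. by case=> QQ QD; rewrite /nrm2 /qf dag_mul QD mulmxA -(mulmxA _ Q Q) QQ. Qed.

Lemma nrm2_split Q y : is_proj Q ->
  nrm2 y = nrm2 (Q *m y) + nrm2 ((1%:M - Q) *m y).
Proof.
move=> HQ; rewrite !nrm2_proj //; last exact: proj_compl.
by rewrite /qf /nrm2 mulmxBr mulmx1 mulmxBl entB addrC subrK.
Qed.

Lemma sum_seq_le0 (I : eqType) (s : seq I) (F : I -> C) :
  (forall i, i \in s -> 0 <= F i) -> \sum_(i <- s) F i <= 0 ->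
  forall i, i \in s -> F i = 0.
Proof.
elim: s => [|j s IH] H0 Hs i //.
rewrite big_cons in Hs.
have Fj : 0 <= F j by apply: H0; rewrite mem_head.
have Fs : 0 <= \sum_(i <- s) F i.
  by rewrite big_seq; apply: sumr_ge0 => k Hk; apply: H0; rewrite inE Hk orbT.
have E : F j + \sum_(i <- s) F i = 0 by apply/eqP; rewrite eq_le Hs addr_ge0.
move/eqP: E; rewrite paddr_eq0 // => /andP [/eqP Ej /eqP Es].
rewrite inE => /orP [/eqP -> //|Hi].
apply: IH => //; first by move=> k Hk; apply: H0; rewrite inE Hk orbT.
by rewrite Es.
Qed.

Lemma pdens_vv x : is_pdens ((1 + nrm2 x)^-1 *: (x *m dag x)).
Proof.
have h0 : 0 < 1 + nrm2 x by rewrite ltr_pwDl // nrm2_ge0.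
split; first by apply: psd_scale; [rewrite invr_ge0 ltW | exact: psd_vv].
rewrite mxtraceZ tr_vv mulrC ler_pdivrMr // mul1r lerDr; exact: ler01.
Qed.

Lemma pos_c x : 0 < (1 + nrm2 x)^-1.
Proof. by rewrite invr_gt0 ltr_pwDl // nrm2_ge0. Qed.

Lemma mx_eq0_col m (A : 'M[C]_(m, n)) : (forall v, A *m v = 0) -> A = 0.
Proof. by move=> H; apply: mx_eq_col => v; rewrite H mul0mx. Qed.

Lemma L2a P Q Ks : is_proj P -> is_proj Q ->
  (forall rho, is_pdens rho ->
     \tr (P *m rho) <= \tr (Q *m kr Ks rho) + \tr rho - \tr (kr Ks rho)) ->
  forall K, K \in Ks -> (1%:M - Q) *m K *m P = 0.
Proof.
move=> HP HQ H K HK; apply: mx_eq0_col => v.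
set x := P *m v.
have Px : P *m x = x by rewrite /x mulmxA; case: HP => -> _.
have := H _ (pdens_vv x).
rewrite kr_scale -!scalemxAr !mxtraceZ mulmxA Px tr_Qkr_vv // tr_kr_vv.
set c := (1 + nrm2 x)^-1.
rewrite lerBrDr [c * \tr _ + _]addrC lerD2r ler_pM2l ?pos_c //.
rewrite (eq_bigr (fun K => nrm2 (Q *m K *m x) + nrm2 ((1%:M - Q) *m K *m x))); last first.
  by move=> K' _; rewrite (nrm2_split _ HQ) !mulmxA.
rewrite big_split /= -lerBrDl subrr => Hle.
have := sum_seq_le0 (fun K _ => nrm2_ge0 ((1%:M - Q) *m K *m x)) Hle HK.
by move/nrm2_eq0; rewrite -!mulmxA.
Qed.

Lemma L2b P Q Ks : is_proj P -> is_proj Q -> tnonincr Ks ->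
  (forall K, K \in Ks -> (1%:M - Q) *m K *m P = 0) ->
  forall rho, psd rho ->
     \tr (P *m rho) <= \tr (Q *m kr Ks rho) + \tr rho - \tr (kr Ks rho).
Proof.
move=> HP HQ Htn HK rho Hr.
have HP' := proj_compl HP; have HQ' := proj_compl HQ.
set P' := 1%:M - P; set Q' := 1%:M - Q.
set sig := P' *m rho *m dag P'.
have sigE : sig = P' *m rho *m dag P' by [].
have Hs : psd sig by apply: psd_GsG.
clearbody sig.
have key : \tr (Q' *m kr Ks rho) <= \tr (kr Ks sig).
  rewrite /kr !mulmx_sumr !tr_sum big_seq [X in _ <= X]big_seq.
  apply: ler_sum => K HKs.
  have e1 : Q' *m K = Q' *m K *m P'.
    by rewrite /P' mulmxBr mulmx1 (HK K HKs) subr0.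
  have e2 := congr1 (@dag R n n) e1; rewrite !dag_mul in e2.
  rewrite (tr_proj _ HQ') !mulmxA e1.
  have -> : Q' *m K *m P' *m rho *m dag K *m dag Q' = Q' *m (K *m sig *m dag K) *m dag Q'.
    by rewrite sigE -!mulmxA {1}e2.
  rewrite -(tr_proj _ HQ') /Q' mulmxBl mul1mx raddfB /= lerBlDr lerDl.
  have -> : \tr (Q *m (K *m sig *m dag K)) = \tr (Q *m K *m sig *m dag (Q *m K)).
    by rewrite (tr_proj _ HQ) dag_mul !mulmxA.
  exact: tr_GsG.
have := le_trans key (Htn _ Hs).
rewrite sigE -(tr_proj _ HP') /P' /Q' !mulmxBl !mul1mx !raddfB /=.
move=> h; rewrite -subr_ge0.
have -> : \tr (Q *m kr Ks rho) + \tr rho - \tr (kr Ks rho) - \tr (P *m rho) =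
  (\tr rho - \tr (P *m rho)) - (\tr (kr Ks rho) - \tr (Q *m kr Ks rho)) by ring.
by rewrite subr_ge0.
Qed.

End P4.

From HB Require Import structures.
From mathcomp Require Import all_boot all_order all_algebra.
From mathcomp Require Import finmap complex reals.
From mathcomp Require Import ring.
Set Implicit Arguments.
Unset Strict Implicit.
Unset Printing Implicit Defensive.
Import Order.TTheory GRing.Theory Num.Theory.
Local Open Scope ring_scope.

Section P5.
Variable R : realType.
Local Notation C := (R[i]).
Variable n : nat.
Implicit Types (P Q A B M rho sig : 'M[C]_n) (Ks : seq 'M[C]_n) (v x : 'cV[C]_n).

Lemma qf_Mk Ks v : qf (Mk Ks) v = nrm2 v - \tr (kr Ks (v *m dag v)).
Proof.
rewrite /qf /Mk mulmxBr mulmx1 mulmxBl entB -/(nrm2 v) tr_kr_vv.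
rewrite mulmx_sumr mulmx_suml summxE; congr (_ - _); apply: eq_bigr => K _.
by rewrite -qf_KK.
Qed.

Lemma Mk_herm Ks : dag (Mk Ks) = Mk Ks.
Proof.
rewrite /Mk dag_sub dag1 dag_sum; congr (_ - _); apply: eq_bigr => K _.
by rewrite dag_mul dagK.
Qed.

Lemma Mk_psd Ks : tnonincr Ks -> psd (Mk Ks).
Proof.
move=> Htn v; rewrite -/(qf _ v) qf_Mk subr_ge0 -tr_vv.
by apply: Htn; apply: psd_vv.
Qed.

Lemma Mk_zero Ks v : tnonincr Ks ->
  (Mk Ks *m v = 0 <-> \tr (kr Ks (v *m dag v)) = \tr (v *m dag v)).
Proof.
move=> Htn; split => H.
  have : qf (Mk Ks) v = 0 by rewrite /qf -mulmxA H mulmx0 mxE.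
  by rewrite qf_Mk tr_vv => /eqP; rewrite subr_eq0 => /eqP.
apply: psd_zero; [exact: Mk_psd | exact: Mk_herm |].
by rewrite qf_Mk H tr_vv subrr.
Qed.

Lemma L3a P Q Ks : is_proj P -> is_proj Q -> tnonincr Ks ->
  (forall rho, is_pdens rho -> \tr (P *m rho) <= \tr (Q *m kr Ks rho)) ->
  forall K, K \in Ks -> (1%:M - Q) *m K *m P = 0.
Proof.
move=> HP HQ Htn H; apply: L2a => // rho Hr.
apply: le_trans (H rho Hr) _; rewrite -addrA lerDl subr_ge0.
by apply: Htn; case: Hr.
Qed.

Lemma L3a' P Q Ks : is_proj P -> is_proj Q -> tnonincr Ks ->
  (forall rho, is_pdens rho -> \tr (P *m rho) <= \tr (Q *m kr Ks rho)) ->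
  Mk Ks *m P = 0.
Proof.
move=> HP HQ Htn H; apply: mx_eq0_col => v; rewrite -mulmxA.
set x := P *m v.
have Px : P *m x = x by rewrite /x mulmxA; case: HP => -> _.
apply: psd_zero; [exact: Mk_psd | exact: Mk_herm |].
apply/eqP; rewrite eq_le; apply/andP; split; last exact: (Mk_psd Htn).
rewrite qf_Mk subr_le0.
have := H _ (pdens_vv x).
rewrite kr_scale -!scalemxAr !mxtraceZ mulmxA Px ler_pM2l ?pos_c // tr_vv.
move=> h; apply: le_trans h _.
rewrite tr_Qkr_vv // tr_kr_vv; apply: ler_sum => K _.
by rewrite (nrm2_split (K *m x) HQ) -mulmxA lerDl nrm2_ge0.
Qed.

Lemma L3b P Q Ks : is_proj P -> is_proj Q ->
  (forall K, K \in Ks -> (1%:M - Q) *m K *m P = 0) -> Mk Ks *m P = 0 ->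
  forall rho, psd rho -> \tr (P *m rho) <= \tr (Q *m kr Ks rho).
Proof.
move=> HP HQ HK HM rho Hr.
have [PP PD] := HP; have [QQ QD] := HQ.
set S := \sum_(K <- Ks) dag K *m K.
have SP : S *m P = P.
  by move: HM; rewrite /Mk -/S mulmxBl mul1mx => /eqP; rewrite subr_eq0 => /eqP.
have PS : P *m S = P.
  have := congr1 (@dag R n n) SP; rewrite dag_mul PD.
  suff -> : dag S = S by [].
  by rewrite /S dag_sum; apply: eq_bigr => K _; rewrite dag_mul dagK.
set P' := 1%:M - P.
have PP' : P *m P' = 0 by rewrite /P' mulmxBr mulmx1 PP subrr.
have P'P : P' *m P = 0 by rewrite /P' mulmxBl mul1mx PP subrr.
have iden : \sum_(K <- Ks) dag K *m Q *m K =
    P + \sum_(K <- Ks) dag (Q *m K *m P') *m (Q *m K *m P').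
  have perK : forall K, K \in Ks -> dag K *m Q *m K =
      P *m (dag K *m K) *m P + P *m (dag K *m K) *m P' + P' *m (dag K *m K) *m P
      + dag (Q *m K *m P') *m (Q *m K *m P').
    move=> K HKs.
    have QKP : Q *m K *m P = K *m P.
      by move: (HK K HKs); rewrite mulmxBl mul1mx mulmxBl => /eqP; rewrite subr_eq0 => /eqP <-.
    have PKQ : P *m dag K *m Q = P *m dag K.
      by have := congr1 (@dag R n n) QKP; rewrite !dag_mul PD QD mulmxA.
    have e : Q *m K = K *m P + Q *m K *m P'.
      by rewrite /P' mulmxBr mulmx1 QKP addrC subrK.
    have -> : dag K *m Q *m K = dag (Q *m K) *m (Q *m K).
      by rewrite dag_mul QD !mulmxA -(mulmxA _ Q Q) QQ.
    have L1 : dag (Q *m K) *m (K *m P) = dag K *m K *m P.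
      by rewrite dag_mul QD -!mulmxA (mulmxA Q K P) QKP.
    have L2 : dag (K *m P) *m (Q *m K *m P') = P *m (dag K *m K) *m P'.
      by rewrite dag_mul PD !mulmxA PKQ.
    have split1 : dag K *m K *m P = P *m (dag K *m K) *m P + P' *m (dag K *m K) *m P.
      by rewrite /P' mulmxBl mul1mx mulmxBl addrC subrK.
    rewrite {2}e mulmxDr L1 {1}e dag_add mulmxDl L2 split1.
    by rewrite !addrA; congr (_ + _); exact: addrAC.
  rewrite big_seq_cond (eq_bigr (fun K => P *m (dag K *m K) *m P + P *m (dag K *m K) *m P'
      + P' *m (dag K *m K) *m P + dag (Q *m K *m P') *m (Q *m K *m P'))); last first.
    by move=> K /andP [HKs _]; exact: perK.
  rewrite -big_seq_cond !big_split /= -!mulmx_suml -!mulmx_sumr -/S.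
  by rewrite PS PP -(mulmxA P' S P) SP PP' P'P !addr0.
rewrite /kr mulmx_sumr tr_sum.
rewrite (eq_bigr (fun K => \tr (dag K *m Q *m K *m rho))); last first.
  by move=> K _; rewrite !mulmxA mxtrace_mulC !mulmxA.
rewrite -tr_sum -mulmx_suml iden mulmxDl raddfD /= lerDl mulmx_suml tr_sum.
apply: sumr_ge0 => K _.
by rewrite -mulmxA mxtrace_mulC; apply: tr_GsG.
Qed.

End P5.

From HB Require Import structures.
From mathcomp Require Import all_boot all_order all_algebra.
From mathcomp Require Import finmap complex reals.
From Stdlib Require Import Classical.
From mathcomp Require Import zify.
Set Implicit Arguments.
Unset Strict Implicit.
Unset Printing Implicit Defensive.
Import Order.TTheory GRing.Theory Num.Theory.
Local Open Scope ring_scope.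

Section P6.
Variable R : realType.
Local Notation C := (R[i]).
Variable n : nat.
Variable S : 'cV[C]_n -> Prop.
Hypothesis S0 : S 0.
Hypothesis SD : forall x y, S x -> S y -> S (x + y).
Hypothesis SZ : forall c x, S x -> S (c *: x).

Let S' (y : 'rV[C]_n) := S y^T.

Lemma S'0 : S' 0. Proof. by rewrite /S' trmx0. Qed.
Lemma S'D x y : S' x -> S' y -> S' (x + y).
Proof.
rewrite /S' => hx hy.
have -> : (x + y)^T = x^T + y^T by apply/matrixP => i j; rewrite !mxE.
exact: SD.
Qed.
Lemma S'Z c x : S' x -> S' (c *: x).
Proof.
rewrite /S' => hx.
have -> : (c *: x)^T = c *: x^T by apply/matrixP => i j; rewrite !mxE.
exact: SZ.
Qed.

Lemma comb m (A : 'M[C]_(m, n)) (y : 'rV[C]_n) :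
  (forall i, S' (row i A)) -> (y <= A)%MS -> S' y.
Proof.
move=> HA /submxP [w ->]; rewrite mulmx_sum_row.
apply: (big_ind S'); [exact: S'0 | exact: S'D | move=> i _; apply: S'Z; exact: HA].
Qed.

Lemma span_ex : exists U : 'M[C]_n, (forall i, S' (row i U)) /\
  forall y, S' y -> (y <= U)%MS.
Proof.
suff H : forall k (U : 'M[C]_n), (forall i, S' (row i U)) -> (n - \rank U <= k)%N ->
    exists U' : 'M[C]_n, (forall i, S' (row i U')) /\ forall y, S' y -> (y <= U')%MS.
  apply: (H n 0); last by rewrite leq_subr.
  by move=> i; rewrite row0; exact: S'0.
elim=> [|k IH] U HU Hk.
  exists U; split => // y _.
  have Hf : row_full U by rewrite /row_full eqn_leq rank_leq_col /= -subn_eq0 -leqn0.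
  exact: submx_full.
case: (classic (exists y, S' y /\ ~~ (y <= U)%MS)) => [[y [Sy Ny]]|Hn]; last first.
  exists U; split => // y Sy; case: (boolP (y <= U)%MS) => // Ny.
  by exfalso; apply: Hn; exists y.
apply: (IH (U + y)%MS).
  move=> i; have := row_sub i (U + y)%MS => /sub_addsmxP [[u1 u2] /= ->].
  apply: S'D; first by apply: (comb HU); exact: submxMl.
  have -> : u2 *m y = u2 0 0 *: y.
    by apply/matrixP => a b; rewrite (ord1 a) !mxE big_ord1.
  exact: S'Z.
have Hlt : (U < U + y)%MS.
  rewrite ltmxE addsmxSl /=; apply/negP => H.
  by move: Ny; rewrite (submx_trans (addsmxSr U y) H).
have := rank_ltmx Hlt; have := rank_leq_col (U + y)%MS.
move: Hk; set a := \rank U; set b := \rank (U + y)%MS; move=> Hk Hb Hab.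
clearbody a b; lia.
Qed.

Lemma dag_invmx k (G : 'M[C]_k) : dag (invmx G) = invmx (dag G).
Proof. by rewrite /dag map_invmx trmx_inv. Qed.

Lemma proj_exists : exists Q : 'M[C]_n, is_proj Q /\ forall x, Q *m x = x <-> S x.
Proof.
have [U [HU HS]] := span_ex.
set r := \rank U.
set B := row_base U.
have Bf : row_free B := row_base_free U.
set Cm := B^T.
set G := dag Cm *m Cm.
have Ginj : forall z : 'rV[C]_r, z *m G = 0 -> z = 0.
  move=> z Hz.
  have h : nrm2 (Cm *m dag z) = 0.
    by rewrite /nrm2 dag_mul dagK !mulmxA -(mulmxA z) -/G Hz !mul0mx mxE.
  have h2 := nrm2_eq0 h.
  have : (Cm *m dag z)^T = 0 by rewrite h2 trmx0.
  rewrite trmx_mul /Cm trmxK => /eqP; rewrite mulmx_free_eq0; last by rewrite trmxK. move=> /eqP h3.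
  have : dag z = 0 by rewrite /dag h3 trmx0.
  by move=> h4; rewrite -[z]dagK h4 dag0.
have Gu : G \in unitmx.
  rewrite -row_free_unit -kermx_eq0; apply/eqP/row_matrixP => i; rewrite row0.
  by apply: Ginj; rewrite -row_mul mulmx_ker row0.
have GD : dag G = G by rewrite /G dag_mul dagK.
have BU : (B <= U)%MS by rewrite /B eq_row_base.
exists (Cm *m invmx G *m dag Cm); split.
  split; last by rewrite !dag_mul dagK dag_invmx GD !mulmxA.
  rewrite !mulmxA -(mulmxA (Cm *m invmx G) (dag Cm) Cm) -/G.
  by rewrite -(mulmxA Cm (invmx G) G) (mulVmx Gu) mulmx1.
move=> x; split => [Hx|Sx].
  rewrite -Hx -!mulmxA; set w := invmx G *m (dag Cm *m x).
  have : S' ((Cm *m w)^T).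
    apply: (comb HU); rewrite trmx_mul trmxK.
    exact: submx_trans (submxMl _ _) BU.
  by rewrite /S' trmxK.
have : (x^T <= B)%MS by rewrite /B eq_row_base; apply: HS; rewrite /S' trmxK.
case/submxP => D HD.
have -> : x = Cm *m D^T by rewrite -[x]trmxK HD trmx_mul.
rewrite -!mulmxA (mulmxA (dag Cm)) -/G (mulmxA (invmx G)) (mulVmx Gu) mul1mx //.
Qed.

End P6.

From HB Require Import structures.
From mathcomp Require Import all_boot all_order all_algebra.
From mathcomp Require Import finmap complex reals.
Set Implicit Arguments.
Unset Strict Implicit.
Unset Printing Implicit Defensive.
Import Order.TTheory GRing.Theory Num.Theory.
Local Open Scope ring_scope.


Section P7.
Variable R : realType.
Local Notation C := (R[i]).
Local Open Scope fset_scope.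

Lemma bound_ex (V : {fset nat}) : exists m, forall v, v \in V -> (v < m)%N.
Proof.
exists (\max_(x : V) val x).+1 => v Hv; rewrite ltnS.
exact: (@leq_bigmax _ (fun x : V => val x) (FSetSub Hv)).
Qed.

Lemma ent_exists (V : {fset nat}) : exists X : {fset nat}, (V `<=` X) /\
  exists psi : ket R X, forall A : op R V, ext X A *m psi = 0 -> A = 0.
Proof.
have [m Hm] := bound_ex V.
set V' := [fset (v + m)%N | v in V].
set X := V `|` V'.
have VX : V `<=` X by rewrite fsubsetUl.
have V'X : forall v, v \in V -> (v + m)%N \in X.
  by move=> v Hv; rewrite in_fsetU; apply/orP; right; apply/imfsetP; exists v.
have V'nV : forall v, (v + m)%N \notin V.
  move=> v; apply/negP => H; have := Hm _ H; by rewrite ltnNge leq_addl.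
exists X; split => //.
pose sig (s : basis X) : basis V := [ffun v : V => asg s (val v + m)].
pose psi : ket R X := mkket (fun s => (restr V s == sig s)%:R).
exists psi => A HA.
pose e (u : basis V) : ket R V := mkket (fun w => (w == u)%:R).
have sig_merge : forall (w : basis V) (r : basis X), sig (Defs.merge w r) = sig r.
  move=> w r; rewrite /sig; apply/ffunP => v; rewrite !ffunE (asg_merge _ _ _ VX).
  by rewrite (negbTE (V'nV _)).
have slice_psi : forall r, slice V r psi = e (sig r).
  move=> r; apply: ket_eqP => w; rewrite !kentE (restr_merge VX) sig_merge //.
have sig_surj : forall u, exists r, sig r = u.
  move=> u; exists [ffun x : X => asg u (val x - m)%N]; rewrite /sig; apply/ffunP => v.
  rewrite ffunE; have Hx := V'X _ (fsvalP v).
  have -> : (val v + m)%N = val (FSetSub Hx) by [].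
  by rewrite asg_val ffunE /= addnK asg_val.
have Ae : forall u, A *m e u = 0.
  move=> u; have [r <-] := sig_surj u.
  rewrite -slice_psi -(slice_ext VX) HA.
  by apply: ket_eqP => w; rewrite kentE !kent0.
apply: op_eqP => s u; rewrite ent0.
have := congr1 (fun z => kent z s) (Ae u); rewrite kent_mul kent0 => <-.
rewrite (bigD1 u) //= kentE eqxx mulr1 big1 ?addr0 // => w Hw.
by rewrite kentE (negbTE Hw) mulr0.
Qed.

End P7.

From HB Require Import structures.
From mathcomp Require Import all_boot all_order all_algebra.
From mathcomp Require Import finmap complex reals.
Set Implicit Arguments.
Unset Strict Implicit.
Unset Printing Implicit Defensive.
Import Order.TTheory GRing.Theory Num.Theory.
Local Open Scope ring_scope.

Section P8.
Variable R : realType.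
Local Notation C := (R[i]).

Section Span.
Variable V : {fset nat}.
Implicit Types (S Z : op R V -> Prop).

Lemma lin_span_ind S Z : Z 0 -> (forall a b, Z a -> Z b -> Z (a + b)) ->
  (forall c a, Z a -> Z (c *: a)) -> (forall B, S B -> Z B) ->
  forall A, lin_span S A -> Z A.
Proof.
move=> Z0 ZD ZZ HS A [cs [Hcs ->]]; rewrite big_seq.
apply: (big_ind Z) => // p Hp; apply: ZZ; apply: HS; exact: Hcs.
Qed.

Lemma lin_span_gen S B : S B -> lin_span S B.
Proof.
move=> HB; exists [:: (1, B)]; split; last by rewrite big_seq1 scale1r.
by move=> p; rewrite inE => /eqP ->.
Qed.

Lemma lin_span0 S : lin_span S 0.
Proof. by exists [::]; split => //; rewrite big_nil. Qed.

Lemma lin_spanD S a b : lin_span S a -> lin_span S b -> lin_span S (a + b).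
Proof.
move=> [c1 [H1 ->]] [c2 [H2 ->]]; exists (c1 ++ c2); split; last by rewrite big_cat.
by move=> p; rewrite mem_cat => /orP [/H1|/H2].
Qed.

Lemma lin_spanZ S c a : lin_span S a -> lin_span S (c *: a).
Proof.
move=> [cs [H ->]]; exists [seq (c * p.1, p.2) | p <- cs]; split.
  by move=> p /mapP [q Hq ->] /=; apply: H.
by rewrite big_map scaler_sumr; apply: eq_bigr => p _; rewrite scalerA.
Qed.

Lemma lin_span_mono S1 S2 A : (forall B, S1 B -> S2 B) -> lin_span S1 A -> lin_span S2 A.
Proof. by move=> H [cs [Hc E]]; exists cs; split => // p /Hc /H. Qed.

Lemma lin_span_span S A : lin_span (lin_span S) A -> lin_span S A.
Proof.
apply: lin_span_ind => //; [exact: lin_span0 | exact: lin_spanD | exact: lin_spanZ].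
Qed.

Lemma join_span_mono (GG1 GG2 : sop R V -> Prop) A :
  (forall G, GG1 G -> GG2 G) -> join_span GG1 A -> join_span GG2 A.
Proof. by move=> H; apply: lin_span_mono => B [G [HG HB]]; exists G; split => //; apply: H. Qed.

End Span.

Lemma dvv n (v : 'cV[C]_n) : dag v *m v = (nrm2 v)%:M.
Proof. by apply/matrixP => i j; rewrite (ord1 i) (ord1 j) [RHS]mxE eqxx mulr1n. Qed.

Lemma proj_vv n (v : 'cV[C]_n) :
  is_proj ((nrm2 v)^-1 *: (v *m dag v)) /\ ((nrm2 v)^-1 *: (v *m dag v)) *m v = v.
Proof.
set c := (nrm2 v)^-1.
have Pv : (c *: (v *m dag v)) *m v = v.
  rewrite -scalemxAl -mulmxA dvv mul_mx_scalar scalerA.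
  have [H|H] := eqVneq (nrm2 v) 0; first by rewrite (nrm2_eq0 H) !scaler0.
  by rewrite /c mulVf // scale1r.
split => //; split.
  by rewrite -scalemxAr mulmxA Pv.
rewrite dag_scale dag_mul dagK geC0_conj // /c invr_ge0; exact: nrm2_ge0.
Qed.

Lemma is_proj1 n : is_proj (1%:M : 'M[C]_n).
Proof. by split; [rewrite mulmx1 | rewrite dag1]. Qed.

Section Glue.
Variables (V X : {fset nat}).
Hypothesis VX : (V `<=` X)%fset.

Lemma ext_proj (P : op R V) : is_proj P -> is_proj (ext X P).
Proof. by case=> PP PD; split; rewrite -?(ext_mul VX) -?ext_dag ?PP ?PD. Qed.

Lemma kr_ext (E : sop R V) Ks (rho : op R X) : kraus_of E Ks ->
  kr (map (@ext R V X) Ks) rho = ext_sop E rho.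
Proof. by move=> HK; rewrite /kr big_map (ext_sop_kraus VX _ HK). Qed.

Lemma tn_V (E : sop R V) Ks : kraus_of E Ks -> trace_nonincr E -> tnonincr Ks.
Proof. by move=> HK HE sig Hs; rewrite /kr -HK; apply: HE. Qed.

Lemma tn_ext (E : sop R V) Ks : kraus_of E Ks -> trace_nonincr E ->
  tnonincr (map (@ext R V X) Ks).
Proof. by move=> HK HE sig Hs; rewrite (kr_ext _ HK); apply: (ext_tn VX). Qed.

Lemma Mk_ext Ks : Mk (map (@ext R V X) Ks) = ext X (Mk Ks).
Proof.
rewrite /Mk big_map ext_sub ext1 // ext_sum; congr (_ - _); apply: eq_bigr => K _.
by rewrite (ext_mul VX) ext_dag.
Qed.

End Glue.

Lemma T_of_Mk V (E : sop R V) Ks psi : kraus_of E Ks -> trace_nonincr E ->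
  (T_of E psi <-> Mk Ks *m psi = 0).
Proof.
move=> HK HE; rewrite (Mk_zero _ (tn_V HK HE)) /T_of HK; done.
Qed.

Lemma tr_Ykr_vv n (Y : 'M[C]_n) Ks (x : 'cV[C]_n) :
  \tr (Y *m kr Ks (x *m dag x) *m dag Y) = \sum_(K <- Ks) nrm2 (Y *m K *m x).
Proof.
rewrite /kr mulmx_sumr mulmx_suml tr_sum; apply: eq_bigr => K _.
by rewrite -tr_vv !dag_mul !mulmxA.
Qed.

Lemma REP V X (G : sop R V) Ks1 Ks2 (Y : op R X) (x : ket R X) :
  (V `<=` X)%fset -> kraus_of G Ks1 -> kraus_of G Ks2 ->
  \sum_(K <- Ks1) nrm2 (Y *m ext X K *m x) = \sum_(K <- Ks2) nrm2 (Y *m ext X K *m x).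
Proof.
move=> VX H1 H2.
rewrite -(big_map (@ext R V X) xpredT (fun K => nrm2 (Y *m K *m x))).
rewrite -(big_map (@ext R V X) xpredT (fun K => nrm2 (Y *m K *m x))).
by rewrite -!tr_Ykr_vv (kr_ext VX _ H1) (kr_ext VX _ H2).
Qed.

Lemma kraus_comp V (E : sop R V) Ks (T : op R V) : kraus_of E Ks -> dag T = T ->
  kraus_of (fun A => E (T *m A *m T)) (map (fun K => K *m T) Ks).
Proof.
move=> HK HT A; rewrite HK big_map; apply: eq_bigr => K _.
by rewrite dag_mul HT !mulmxA.
Qed.

End P8.

From HB Require Import structures.
From mathcomp Require Import all_boot all_order all_algebra.
From mathcomp Require Import finmap complex reals.
Set Implicit Arguments.
Unset Strict Implicit.
Unset Printing Implicit Defensive.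
Import Order.TTheory GRing.Theory Num.Theory.
Local Open Scope ring_scope.

Section P9.
Variable R : realType.
Local Notation C := (R[i]).

Lemma nprog_kraus V (GG : sop R V -> Prop) G : NProg GG -> GG G ->
  (exists Ks, kraus_of G Ks) /\ trace_nonincr G.
Proof. by case=> _ HD _ _ /HD [HC Ht]. Qed.

Lemma join_ind V (GG : sop R V -> Prop) (Z : op R V -> Prop) :
  Z 0 -> (forall a b, Z a -> Z b -> Z (a + b)) -> (forall c a, Z a -> Z (c *: a)) ->
  (forall G Ks K, GG G -> kraus_of G Ks -> K \in Ks -> Z K) ->
  forall A, join_span GG A -> Z A.
Proof.
move=> Z0 ZD ZZ H; apply: lin_span_ind => // B [G [HG [Ks [HK Hls]]]].
move: Hls; apply: lin_span_ind => // K HKs; exact: H HG HK HKs.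
Qed.

Lemma join_ind0 V X (GG : sop R V -> Prop) (L M : op R X) : (V `<=` X)%fset ->
  (forall G Ks K, GG G -> kraus_of G Ks -> K \in Ks -> L *m ext X K *m M = 0) ->
  forall A, join_span GG A -> L *m ext X A *m M = 0.
Proof.
move=> VX; apply: join_ind.
- by rewrite ext0 // mulmx0 mul0mx.
- by move=> a b ha hb; rewrite ext_add mulmxDr mulmxDl ha hb addr0.
- by move=> c a ha; rewrite ext_scale -scalemxAr -scalemxAl ha scaler0.
Qed.

Lemma join_gen V (GG : sop R V -> Prop) G Ks K : GG G -> kraus_of G Ks -> K \in Ks ->
  join_span GG K.
Proof.
move=> HG HK HKs; apply: lin_span_gen; exists G; split => //.
by exists Ks; split => //; apply: lin_span_gen.
Qed.

Lemma join0 V (GG : sop R V -> Prop) : join_span GG 0.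
Proof. exact: lin_span0. Qed.
Lemma joinD V (GG : sop R V -> Prop) a b : join_span GG a -> join_span GG b -> join_span GG (a + b).
Proof. exact: lin_spanD. Qed.
Lemma joinZ V (GG : sop R V -> Prop) c a : join_span GG a -> join_span GG (c *: a).
Proof. exact: lin_spanZ. Qed.

Section Main.
Variable V : {fset nat}.
Variables EE FF : sop R V -> Prop.
Hypothesis NE : NProg EE.
Hypothesis NF : NProg FF.

Lemma part1_if : (forall A, join_span FF A -> join_span EE A) -> refP EE FF.
Proof.
move=> Hsp W P Q HP HQ Hpar X VWX rho Hr F HF.
have VWX' := VWX; move: VWX'; rewrite fsubUset => /andP [VX WX].
have [[Bs HB] HFt] := nprog_kraus NF HF.
have HPX := ext_proj WX HP; have HQX := ext_proj WX HQ.
rewrite -(kr_ext VX _ HB).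
apply: L2b => //; [by move=> s Hs; apply: (tn_ext VX HB HFt) | | by case: Hr].
move=> K /mapP [B HBs ->].
apply: (join_ind0 VX (GG := EE)); last by apply: Hsp; exact: join_gen HF HB HBs.
move=> E Ks K' HE HK HK'.
apply: (L2a HPX HQX _ (map_f _ HK')) => rho' Hr'.
rewrite (kr_ext VX _ HK); exact: Hpar.
Qed.

Lemma part1_only : refP EE FF -> forall A, join_span FF A -> join_span EE A.
Proof.
move=> Href.
have [X [VX [psi Hinj]]] := ent_exists R V.
pose J := join_span EE.
pose S := fun x : ket R X => exists A, J A /\ x = ext X A *m psi.
have S0 : S 0 by exists 0; split; [exact: join0 | rewrite ext0 // mul0mx].
have SD : forall x y, S x -> S y -> S (x + y).
  move=> x y [a [Ja ->]] [b [Jb ->]]; exists (a + b); split; first exact: joinD.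
  by rewrite ext_add mulmxDl.
have SZ : forall c x, S x -> S (c *: x).
  move=> c x [a [Ja ->]]; exists (c *: a); split; first exact: joinZ.
  by rewrite ext_scale scalemxAl.
have [Q [HQ HQS]] := @proj_exists R _ S S0 SD SZ.
set P := (nrm2 psi)^-1 *: (psi *m dag psi).
have [HP Ppsi] := proj_vv psi.
have Hp : par_sat EE P Q.
  move=> X' VXX' rho Hr E HE.
  move: VXX'; rewrite fsubUset => /andP [VX' XX'].
  have [[Ks HK] HEt] := nprog_kraus NE HE.
  rewrite -(kr_ext VX' _ HK).
  apply: L2b; [exact: ext_proj | exact: ext_proj | by move=> s Hs; apply: (tn_ext VX' HK HEt) | | by case: Hr].
  move=> K' /mapP [K HKs ->].
  rewrite -(ext_trans K VX XX') -(ext1 R XX') -ext_sub -!(ext_mul XX').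
  suff -> : (1%:M - Q) *m ext X K *m P = 0 by rewrite ext0.
  have h : Q *m (ext X K *m psi) = ext X K *m psi.
    by apply/HQS; exists K; split => //; exact: join_gen HE HK HKs.
  by rewrite /P -scalemxAr mulmxA mulmxBl mul1mx mulmxBl -(mulmxA Q) h subrr mul0mx scaler0.
have Hf := Href X P Q HP HQ Hp.
have XX : (V `|` X `<=` X)%fset by rewrite fsubUset VX fsubset_refl.
have key : forall F Bs B, FF F -> kraus_of F Bs -> B \in Bs -> J B.
  move=> F Bs B HF HB HBs.
  have [_ HFt] := nprog_kraus NF HF.
  have h0 : (1%:M - Q) *m ext X B *m P = 0.
    have := L2a HP HQ (Ks := map (@ext R V X) Bs) _ (map_f _ HBs); apply => rho Hr.
    have := Hf X XX rho Hr F HF; rewrite !ext_id (kr_ext VX _ HB) //.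
  have h1 : Q *m (ext X B *m psi) = ext X B *m psi.
    have := congr1 (fun M => M *m psi) h0; rewrite -mulmxA Ppsi mul0mx mulmxBl mul1mx.
    by rewrite mulmxBl => /eqP; rewrite subr_eq0 -mulmxA => /eqP <-.
  have [A [HA E]] := (HQS _).1 h1.
  suff -> : B = A by [].
  apply/eqP; rewrite -subr_eq0; apply/eqP; apply: Hinj.
  by rewrite ext_sub mulmxBl E subrr.
apply: join_ind; [exact: join0 | exact: joinD | exact: joinZ | exact: key].
Qed.

End Main.
End P9.

From HB Require Import structures.
From mathcomp Require Import all_boot all_order all_algebra.
From mathcomp Require Import finmap complex reals.
Set Implicit Arguments.
Unset Strict Implicit.
Unset Printing Implicit Defensive.
Import Order.TTheory GRing.Theory Num.Theory.
Local Open Scope ring_scope.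

Section P10.
Variable R : realType.
Local Notation C := (R[i]).

Lemma slice0 V X (r : basis X) : slice V r (0 : ket R X) = 0.
Proof. by apply: ket_eqP => w; rewrite kentE !kent0. Qed.

Lemma nrm2_0 n : nrm2 (0 : 'cV[C]_n) = 0.
Proof. by rewrite /nrm2 mulmx0 mxE. Qed.

Section Main2.
Variable V : {fset nat}.
Variables EE FF : sop R V -> Prop.
Hypothesis NE : NProg EE.
Hypothesis NF : NProg FF.
Variable TE : op R V.
Hypothesis HT : is_proj TE.
Hypothesis HTset : forall psi, T_set EE psi <-> TE *m psi = psi.

Lemma TED : dag TE = TE. Proof. by case: HT. Qed.

Lemma TE_T psi : T_set EE (TE *m psi).
Proof. by apply/HTset; rewrite mulmxA; case: HT => ->. Qed.

Lemma Tset_Mk (GG : sop R V -> Prop) G Ks psi : NProg GG -> GG G -> kraus_of G Ks ->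
  T_set GG psi -> Mk Ks *m psi = 0.
Proof.
move=> NG HG HK Hpsi; have [_ HGt] := nprog_kraus NG HG.
by apply/(T_of_Mk _ HK HGt); apply: Hpsi.
Qed.

Lemma TE_Mk E Ks : EE E -> kraus_of E Ks -> Mk Ks *m TE = 0.
Proof.
move=> HE HK; apply: mx_eq0_col => v; rewrite -mulmxA.
apply: (Tset_Mk NE HE HK); exact: TE_T.
Qed.

Lemma part2_if : (forall psi, T_set EE psi -> T_set FF psi) ->
  (forall A, join_span (comp_proj FF TE) A -> join_span (comp_proj EE TE) A) ->
  refT EE FF.
Proof.
move=> Hsub Hsp W P Q HP HQ Htot X VWX rho Hr F HF.
have VWX' := VWX; move: VWX'; rewrite fsubUset => /andP [VX WX].
have [[Bs HB] HFt] := nprog_kraus NF HF.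
have HPX := ext_proj WX HP; have HQX := ext_proj WX HQ.
have Htot' : forall E Ks, EE E -> kraus_of E Ks -> forall rho, is_pdens rho ->
    \tr (ext X P *m rho) <= \tr (ext X Q *m kr (map (@ext R V X) Ks) rho).
  by move=> E Ks HE HK rho' Hr'; rewrite (kr_ext VX _ HK); apply: Htot.
have hE1 : forall E Ks K, EE E -> kraus_of E Ks -> K \in Ks ->
    (1%:M - ext X Q) *m ext X K *m ext X P = 0.
  move=> E Ks K HE HK HKs; have [_ HEt] := nprog_kraus NE HE.
  apply: (L3a HPX HQX _ (Htot' _ _ HE HK) (map_f _ HKs)).
  by move=> s Hs; apply: (tn_ext VX HK HEt).
have hE2 : forall E Ks, EE E -> kraus_of E Ks -> ext X (Mk Ks) *m ext X P = 0.
  move=> E Ks HE HK; have [_ HEt] := nprog_kraus NE HE.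
  rewrite -(Mk_ext VX); apply: (L3a' HPX HQX _ (Htot' _ _ HE HK)).
  by move=> s Hs; apply: (tn_ext VX HK HEt).
have stepT : ext X TE *m ext X P = ext X P.
  apply: mx_eq_col => v; rewrite -mulmxA; apply: (slice_eq VX) => r.
  rewrite (slice_ext VX); apply/HTset => E HE.
  have [[Ks HK] HEt] := nprog_kraus NE HE.
  apply/(T_of_Mk _ HK HEt).
  by rewrite -(slice_ext VX) mulmxA (hE2 _ _ HE HK) mul0mx slice0.
have MkF : Mk Bs *m TE = 0.
  apply: mx_eq0_col => v; rewrite -mulmxA.
  apply: (Tset_Mk NF HF HB); apply: Hsub; exact: TE_T.
rewrite -(kr_ext VX _ HB).
apply: L3b => //; last by case: Hr.
  move=> K /mapP [B HBs ->].
  rewrite -stepT mulmxA -(mulmxA _ (ext X B)) -(ext_mul VX).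
  apply: (join_ind0 VX (GG := comp_proj EE TE)); last first.
    apply: Hsp; apply: (join_gen (G := fun A => F (TE *m A *m TE))).
    - by exists F.
    - exact: (kraus_comp HB TED).
    - exact: map_f.
  move=> G' Ks' K' [E [HE ->]] HK' HK'in.
  have [[Ks HK] HEt] := nprog_kraus NE HE.
  apply: mx_eq0_col => v; rewrite -!mulmxA.
  apply: nrm2_eq0.
  have hs : \sum_(K <- Ks') nrm2 ((1%:M - ext X Q) *m ext X K *m (ext X P *m v)) = 0.
    rewrite (REP _ _ VX HK' (kraus_comp HK TED)) big_map big1_seq // => K0 /andP [_ HKs].
    rewrite (ext_mul VX) -!mulmxA (mulmxA (ext X TE)) stepT !mulmxA (hE1 _ _ _ HE HK HKs).
    by rewrite mul0mx nrm2_0.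
  have := @sum_seq_le0 _ _ Ks' (fun K => nrm2 ((1%:M - ext X Q) *m ext X K *m (ext X P *m v)))
     (fun K _ => nrm2_ge0 _) _ K' HK'in.
  by rewrite hs lexx !mulmxA => /(_ isT).
by rewrite (Mk_ext VX) -stepT mulmxA -(ext_mul VX) MkF ext0 mul0mx.
Qed.

End Main2.
End P10.

From HB Require Import structures.
From mathcomp Require Import all_boot all_order all_algebra.
From mathcomp Require Import finmap complex reals.
Set Implicit Arguments.
Unset Strict Implicit.
Unset Printing Implicit Defensive.
Import Order.TTheory GRing.Theory Num.Theory.
Local Open Scope ring_scope.

Section P11.
Variable R : realType.
Local Notation C := (R[i]).

Section Main3.
Variable V : {fset nat}.
Variables EE FF : sop R V -> Prop.
Hypothesis NE : NProg EE.
Hypothesis NF : NProg FF.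
Variable TE : op R V.
Hypothesis HT : is_proj TE.
Hypothesis HTset : forall psi, T_set EE psi <-> TE *m psi = psi.

Lemma part2_T : refT EE FF -> forall psi, T_set EE psi -> T_set FF psi.
Proof.
move=> Href psi Hpsi.
set P := (nrm2 psi)^-1 *: (psi *m dag psi).
have [HP Ppsi] := proj_vv psi.
have VV : (V `|` V `<=` V)%fset by rewrite fsetUid fsubset_refl.
have Ht : tot_sat EE P (1%:M : op R V).
  move=> X VVX rho Hr E HE.
  have VX : (V `<=` X)%fset by move: VVX; rewrite fsetUid.
  have [[Ks HK] HEt] := nprog_kraus NE HE.
  have Mpsi : Mk Ks *m psi = 0 by apply: (Tset_Mk NE HE HK).
  rewrite -(kr_ext VX _ HK).
  apply: L3b; [exact: (ext_proj VX HP) | exact: (ext_proj VX (is_proj1 R _)) | | | by case: Hr].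
    by move=> K _; rewrite (ext1 R VX) subrr !mul0mx.
  rewrite (Mk_ext VX) -(ext_mul VX).
  by rewrite /P -scalemxAr mulmxA Mpsi mul0mx scaler0 ext0.
have Hf := Href V P 1%:M HP (is_proj1 R _) Ht.
move=> F HF; have [[Bs HB] HFt] := nprog_kraus NF HF.
apply/(T_of_Mk _ HB HFt).
have : Mk Bs *m P = 0.
  apply: (L3a' HP (is_proj1 R _) (tn_V HB HFt)) => rho Hr.
  have := Hf V VV rho Hr F HF; rewrite !ext_id -(kr_ext (fsubset_refl V) _ HB).
  by rewrite (eq_map (@ext_id R V)) map_id.
by move=> h; rewrite -Ppsi mulmxA h mul0mx.
Qed.

Lemma part2_span : refT EE FF ->
  forall A, join_span (comp_proj FF TE) A -> join_span (comp_proj EE TE) A.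
Proof.
move=> Href.
have [X [VX [psi Hinj]]] := ent_exists R V.
pose J := join_span (comp_proj EE TE).
pose S := fun x : ket R X => exists A, J A /\ x = ext X A *m psi.
have S0 : S 0 by exists 0; split; [exact: join0 | rewrite ext0 // mul0mx].
have SD : forall x y, S x -> S y -> S (x + y).
  move=> x y [a [Ja ->]] [b [Jb ->]]; exists (a + b); split; first exact: joinD.
  by rewrite ext_add mulmxDl.
have SZ : forall c x, S x -> S (c *: x).
  move=> c x [a [Ja ->]]; exists (c *: a); split; first exact: joinZ.
  by rewrite ext_scale scalemxAl.
have [Q [HQ HQS]] := @proj_exists R _ S S0 SD SZ.
set phi := ext X TE *m psi.
set P := (nrm2 phi)^-1 *: (phi *m dag phi).
have [HP Pphi] := proj_vv phi.
have Ht : tot_sat EE P Q.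
  move=> X' VXX' rho Hr E HE.
  move: VXX'; rewrite fsubUset => /andP [VX' XX'].
  have [[Ks HK] HEt] := nprog_kraus NE HE.
  rewrite -(kr_ext VX' _ HK).
  apply: L3b; [exact: ext_proj | exact: ext_proj | | | by case: Hr].
    move=> K' /mapP [K HKs ->].
    rewrite -(ext_trans K VX XX') -(ext1 R XX') -ext_sub -!(ext_mul XX').
    suff -> : (1%:M - Q) *m ext X K *m P = 0 by rewrite ext0.
    have h : Q *m (ext X K *m phi) = ext X K *m phi.
      apply/HQS; exists (K *m TE); split; last by rewrite /phi mulmxA (ext_mul VX).
      apply: (join_gen (G := fun A => E (TE *m A *m TE))).
      - by exists E.
      - exact: (kraus_comp HK (TED HT)).
      - exact: map_f.
    by rewrite /P -scalemxAr mulmxA mulmxBl mul1mx mulmxBl -(mulmxA Q) h subrr mul0mx scaler0.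
  rewrite (Mk_ext VX') -(ext_trans (Mk Ks) VX XX') -(ext_mul XX').
  suff -> : ext X (Mk Ks) *m P = 0 by rewrite ext0.
  rewrite /P -scalemxAr mulmxA /phi mulmxA -(ext_mul VX) (TE_Mk NE HT HTset HE HK).
  by rewrite ext0 !mul0mx scaler0.
have Hf := Href X P Q HP HQ Ht.
have XX : (V `|` X `<=` X)%fset by rewrite fsubUset VX fsubset_refl.
have key : forall G' Ks' K', comp_proj FF TE G' -> kraus_of G' Ks' -> K' \in Ks' -> J K'.
  move=> G' Ks' K' [F [HF ->]] HK' HK'in.
  have [[Bs HB] HFt] := nprog_kraus NF HF.
  have h0 : forall B, B \in Bs -> (1%:M - Q) *m ext X B *m P = 0.
    move=> B HBs.
    apply: (L3a HP HQ _ _ (map_f _ HBs)); first by move=> s Hs; apply: (tn_ext VX HB HFt).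
    move=> rho Hr; have := Hf X XX rho Hr F HF; rewrite !ext_id (kr_ext VX _ HB) //.
  have hs : \sum_(K <- Ks') nrm2 ((1%:M - Q) *m ext X K *m psi) = 0.
    rewrite (REP _ _ VX HK' (kraus_comp HB (TED HT))) big_map big1_seq // => B /andP [_ HBs].
    rewrite (ext_mul VX) -!mulmxA -/phi -Pphi !mulmxA (h0 _ HBs) mul0mx.
    by rewrite mul0mx nrm2_0.
  have := @sum_seq_le0 _ _ Ks' (fun K => nrm2 ((1%:M - Q) *m ext X K *m psi))
     (fun K _ => nrm2_ge0 _) _ K' HK'in.
  rewrite hs lexx => /(_ isT) /nrm2_eq0.
  rewrite mulmxBl mul1mx mulmxBl => /eqP; rewrite subr_eq0 -mulmxA => /eqP /esym h1.
  have [A [HA E]] := (HQS _).1 h1.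
  suff -> : K' = A by [].
  apply/eqP; rewrite -subr_eq0; apply/eqP; apply: Hinj.
  by rewrite ext_sub mulmxBl E subrr.
apply: join_ind; [exact: join0 | exact: joinD | exact: joinZ | exact: key].
Qed.

End Main3.
End P11.

From HB Require Import structures.
From mathcomp Require Import all_boot all_order all_algebra.
From mathcomp Require Import finmap complex reals.
From Stdlib Require Import FunctionalExtensionality.
Local Open Scope ring_scope.

Theorem theorem5p8 (R : realType) (V : {fset nat}) (EE FF : sop R V -> Prop) :
  NProg EE -> NProg FF ->
  (* (1) *)
  (refP EE FF <->
     (forall A, join_span FF A -> join_span EE A)) /\
  (* (2): TE is the projector onto the subspace T_EE *)
  (forall TE : op R V, is_proj TE -> (forall psi, T_set EE psi <-> TE *m psi = psi) ->
     (refT EE FF <->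
        ((forall psi, T_set EE psi -> T_set FF psi) /\
         (forall A, join_span (comp_proj FF TE) A -> join_span (comp_proj EE TE) A)))) /\
  (* (3) *)
  ((forall E, EE E -> trace_pres E) -> (forall F, FF F -> trace_pres F) ->
     (refT EE FF <-> refP EE FF)).
Proof.
move=> NE NF.
have H1 : refP EE FF <-> (forall A, join_span FF A -> join_span EE A).
  by split; [exact: part1_only | exact: part1_if].
have H2 : forall TE : op R V, is_proj TE -> (forall psi, T_set EE psi <-> TE *m psi = psi) ->
     (refT EE FF <->
        ((forall psi, T_set EE psi -> T_set FF psi) /\
         (forall A, join_span (comp_proj FF TE) A -> join_span (comp_proj EE TE) A))).
  move=> TE HT HTs; split.
    move=> Href; split; first exact: part2_T.
    exact: (part2_span NE NF HT HTs).
  by case=> a b; apply: (part2_if NE NF HT HTs).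
split => //; split => // HEp HFp.
have cp1 : forall (GG : sop R V -> Prop) G, comp_proj GG 1%:M G <-> GG G.
  move=> GG G; split.
    case=> G0 [HG0 ->].
    suff -> : (fun A => G0 (1%:M *m A *m 1%:M)) = G0 by [].
    by apply: functional_extensionality => A; rewrite mul1mx mulmx1.
  move=> HG; exists G; split => //.
  by apply: functional_extensionality => A; rewrite mul1mx mulmx1.
have HTs : forall psi, T_set EE psi <-> (1%:M : op R V) *m psi = psi.
  by move=> psi; rewrite mul1mx; split => // _ E HE; rewrite /T_of HEp.
have [H2a H2b] := H2 _ (is_proj1 R _) HTs.
split.
  move=> Href; apply/H1 => A HA.
  have [_ Hs] := H2a Href.
  apply: (join_span_mono (GG1 := comp_proj EE 1%:M)); first by move=> G /cp1.
  apply: Hs; apply: (join_span_mono (GG1 := FF)) => // G /cp1 //.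
move=> Hp; apply: H2b; split.
  by move=> psi _ F HF; rewrite /T_of HFp.
move=> A HA.
apply: (join_span_mono (GG1 := EE)); first by move=> G /cp1.
apply: (H1.1 Hp); apply: (join_span_mono (GG1 := comp_proj FF 1%:M)) => // G /cp1 //.
Qed.
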